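(* Let $\Gamma$ be a primitive strongly regular graph. Then $E(\Gamma)=E(\bar\Gamma)$ if and only if either $\Gamma$ is a conference graph, or $\Gamma$ has $OA(n,m)$ parameters, i.e. parameters $(n^2, m(n-1), m^2-3m+n, m(m-1))$, for some positive integers $n,m$ with $m\notin\{n,n+1\}$. Moreover, if $E(\Gamma)=E(\bar\Gamma)$ and $\Gamma$ is not a conference graph, then $\Gamma$ and $\bar\Gamma$ are not isospectral.
   Context: A strongly regular graph with parameters $(n,k,e,d)$ is a $k$-regular simple graph on $n$ vertices, neither complete nor edgeless, in which adjacent vertices have $e$ common neighbours and distinct non-adjacent vertices have $d$ common neighbours; it is primitive if it and its complement $\bar\Gamma$ are both connected. A conference graph is a strongly regular graph with parameters $(4t+1,2t,t-1,t)$. The energy $E$ is the sum of the absolute values of the adjacency eigenvalues (with multiplicity); isospectral means equal adjacency spectra with multiplicities. *)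

(* Defs.v *)
From HB Require Import structures.
From mathcomp Require Import all_boot all_order all_algebra all_field.
Set Implicit Arguments. Unset Strict Implicit. Unset Printing Implicit Defensive.
Import Order.TTheory GRing.Theory Num.Theory.

(* A simple graph on a finite vertex type T is a symmetric irreflexive
   relation adj : rel T. *)

Definition compl_graph (T : finType) (adj : rel T) : rel T :=
  fun x y => (x != y) && ~~ adj x y.

Definition common_nbrs (T : finType) (adj : rel T) (x y : T) : nat :=
  #|[set z | adj x z && adj y z]|.

Definition is_srg (T : finType) (adj : rel T) (n k e d : nat) : Prop :=
  [/\ #|T| = n,
      (forall x : T, #|[set y | adj x y]| = k),
      (forall x y : T, adj x y -> common_nbrs adj x y = e),
      (forall x y : T, x != y -> ~~ adj x y -> common_nbrs adj x y = d)
    & ((exists x y : T, x != y /\ ~~ adj x y)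
       /\ (exists x y : T, adj x y)) ].

Definition connected_graph (T : finType) (adj : rel T) : Prop :=
  forall x y : T, connect adj x y.

Definition primitive_srg (T : finType) (adj : rel T) : Prop :=
  connected_graph adj /\ connected_graph (compl_graph adj).

Definition conference_graph (T : finType) (adj : rel T) : Prop :=
  exists t : nat, is_srg adj (4 * t + 1) (2 * t) (t - 1) t.

(* OA(n,m) parameters (n^2, m(n-1), m^2-3m+n, m(m-1));
   the third parameter is written m^2 + n - 3m to avoid truncation of nat
   subtraction in the intermediate m^2 - 3m. *)
Definition OA_params (T : finType) (adj : rel T) (n m : nat) : Prop :=
  is_srg adj (n ^ 2) (m * (n - 1)) (m ^ 2 + n - 3 * m) (m * (m - 1)).

Definition adj_mx (T : finType) (adj : rel T) : 'M[algC]_#|T| :=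
  \matrix_(i, j) (adj (enum_val i) (enum_val j))%:R%R.

Definition spectrum (T : finType) (adj : rel T) : seq algC :=
  sval (closed_field_poly_normal (char_poly (adj_mx adj))).

Definition energy (T : finType) (adj : rel T) : algC :=
  (\sum_(z <- spectrum adj) `|z|)%R.

Definition isospectral (T : finType) (adj1 adj2 : rel T) : Prop :=
  perm_eq (spectrum adj1) (spectrum adj2).

(* Main.v *)
Require Import Defs.
From mathcomp Require Import all_boot all_order all_algebra all_field.
From HB Require Import structures.
From mathcomp Require Import ring lra zify.
Set Implicit Arguments. Unset Strict Implicit. Unset Printing Implicit Defensive.
Import Order.TTheory GRing.Theory Num.Theory.

Module Aux.
Local Open Scope ring_scope.


Lemma charpoly_conj n (P D : 'M[algC]_n) : P \in unitmx ->
  char_poly (invmx P *m D *m P) = char_poly D.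
Proof.
move=> Pu; rewrite /char_poly /char_poly_mx.
set Q := map_mx (@polyC algC) P; set Qi := map_mx (@polyC algC) (invmx P).
have Q1 : Qi *m Q = 1%:M by rewrite -map_mxM mulVmx // map_mx1.
have Q2 : Q *m Qi = 1%:M by rewrite -map_mxM mulmxV // map_mx1.
have E : ('X%:M : 'M[{poly algC}]_n) - map_mx polyC (invmx P *m D *m P) =
   Qi *m ('X%:M - map_mx polyC D) *m Q.
  by rewrite mulmxBr mulmxBl mul_mx_scalar -scalemxAl Q1 scalemx1 !map_mxM.
rewrite E !det_mulmx mulrC mulrA -det_mulmx Q2 det1 mul1r //.
Qed.

Lemma spec_props n (B : 'M[algC]_n) : B \is normalmx ->
  exists d : 'rV[algC]_n,
  [/\ perm_eq (sval (closed_field_poly_normal (char_poly B))) [seq d 0 i | i <- enum 'I_n],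
      \tr B = \sum_i d 0 i,
      \tr (B *m B) = \sum_i d 0 i ^+ 2 &
      forall a b c, (B - a%:M) *m (B - b%:M) *m (B - c%:M) = 0 ->
        forall i, (d 0 i - a) * (d 0 i - b) * (d 0 i - c) = 0].
Proof.
move=> /orthomx_spectralP BE; have Pu := spectral_unit B.
move: BE; set P := spectralmx B; set d := spectral_diag B => BE.
exists d.
have PPi : P *m invmx P = 1%:M by rewrite mulmxV.
have conjS (a : algC) : B - a%:M = invmx P *m (diag_mx d - a%:M) *m P.
  rewrite mulmxBr mulmxBl mul_mx_scalar -scalemxAl mulVmx // scalemx1.
  by rewrite -BE.
have conjM (X Y : 'M_n) : (invmx P *m X *m P) *m (invmx P *m Y *m P) =
     invmx P *m (X *m Y) *m P.
  by rewrite !mulmxA -[_ *m P *m invmx P]mulmxA PPi mulmx1.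
have trC (X : 'M_n) : \tr (invmx P *m X *m P) = \tr X.
  by rewrite mxtrace_mulC mulmxA PPi mul1mx.
split.
- case: closed_field_poly_normal => /= s Hs.
  rewrite (monicP (char_poly_monic _)) scale1r in Hs.
  apply: prod_XsubC_eq; rewrite -Hs {1}BE charpoly_conj // char_poly_trig ?diag_mx_is_trig //.
  rewrite big_map big_enum /=; apply: eq_bigr => i _; by rewrite mxE eqxx mulr1n.
- by rewrite BE trC mxtrace_diag.
- rewrite BE conjM trC mulmx_diag mxtrace_diag; apply: eq_bigr => i _; by rewrite mxE expr2.
- move=> a b c; rewrite !conjS !conjM => H i.
  have : P *m (invmx P *m ((diag_mx d - a%:M) *m (diag_mx d - b%:M) *m (diag_mx d - c%:M)) *m P) *m invmx P = 0.
    by rewrite H mulmx0 mul0mx.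
  rewrite !mulmxA mulmxV // mul1mx -mulmxA PPi mulmx1.
  have dE (x : algC) : diag_mx d - x%:M = diag_mx (\row_j (d 0 j - x)).
    by apply/matrixP => p q; rewrite !mxE; case: eqP => _; rewrite ?mulr1n ?mulr0n ?subr0.
  rewrite !dE !mulmx_diag => /matrixP /(_ i i); rewrite !mxE eqxx mulr1n.
  done.
Qed.

Definition cntv n (d : 'rV[algC]_n) (x : algC) : algC := \sum_i ((d 0 i == x)%:R).

Lemma count3 n (d : 'rV[algC]_n) a b c : a != b -> a != c -> b != c ->
  (forall i, (d 0 i - a) * (d 0 i - b) * (d 0 i - c) = 0) ->
  forall F : algC -> algC,
  \sum_i F (d 0 i) = cntv d a * F a + cntv d b * F b + cntv d c * F c.
Proof.
move=> ab ac bc H F; rewrite /cntv !mulr_suml -!big_split /=.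
apply: eq_bigr => i _; have /eqP := H i; rewrite !mulf_eq0 !subr_eq0.
case/orP => [/orP[]|] /eqP ->; rewrite eqxx ?(negPf ab) ?(negPf ac) ?(negPf bc);
  rewrite ?(eq_sym b a) ?(eq_sym c a) ?(eq_sym c b) ?(negPf ab) ?(negPf ac) ?(negPf bc);
  rewrite ?mul1r ?mul0r ?addr0 ?add0r //.
Qed.

Lemma sym_normal n (B : 'M[algC]_n) : B^T = B -> (forall i j, B i j \is Num.real) ->
  B \is normalmx.
Proof.
move=> BT Br; apply: symmetric_normalmx.
  by apply/is_hermitianmxP; rewrite expr0 scale1r map_mx_id // BT.
by apply/mxOverP.
Qed.

Lemma from_eq (x y u w c : algC) : x - y = c * (u - w) -> u = w -> x = y.
Proof. by move=> h uw; apply/eqP; rewrite -subr_eq0 h uw subrr mulr0. Qed.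

Section Graph.
Variable T : finType.

Lemma sum_enum (F : T -> algC) : \sum_(l < #|T|) F (enum_val l) = \sum_(x : T) F x.
Proof. by rewrite (big_enum_val F). Qed.

Lemma sum_indic (P : pred T) : \sum_(z : T) ((P z)%:R : algC) = #|[set z | P z]|%:R.
Proof.
rewrite -sum1_card natr_sum [RHS]big_mkcond /=; apply: eq_bigr => z _.
by rewrite inE; case: (P z).
Qed.

Lemma adj_mxE (R : rel T) i j : adj_mx R i j = (R (enum_val i) (enum_val j))%:R.
Proof. by rewrite mxE. Qed.

Lemma adj_mx_sym (R : rel T) : symmetric R -> (adj_mx R)^T = adj_mx R.
Proof. by move=> Rs; apply/matrixP => i j; rewrite !mxE Rs. Qed.

Lemma adj_mx_normal (R : rel T) : symmetric R -> adj_mx R \is normalmx.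
Proof. by move=> Rs; apply: sym_normal; [exact: adj_mx_sym | move=> i j; rewrite mxE realn]. Qed.

Definition Jm : 'M[algC]_#|T| := const_mx 1.

Lemma adj_row_sum (R : rel T) i : \sum_l adj_mx R i l = #|[set y | R (enum_val i) y]|%:R.
Proof.
rewrite -sum_indic -sum_enum; apply: eq_bigr => l _; by rewrite mxE.
Qed.

Lemma tr_sq (R : rel T) : symmetric R ->
  \tr (adj_mx R *m adj_mx R) = \sum_i \sum_l adj_mx R i l.
Proof.
move=> Rs; apply: eq_bigr => i _; rewrite mxE; apply: eq_bigr => l _.
by rewrite !mxE Rs; case: (R _ _); rewrite ?mul1r ?mul0r.
Qed.

Lemma mulJ (R : rel T) (a : nat) : (forall x, #|[set y | R x y]| = a) ->
  adj_mx R *m Jm = a%:R *: Jm.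
Proof.
move=> Ha; apply/matrixP => i j; rewrite !mxE ?mulr1.
rewrite -(Ha (enum_val i)) -adj_row_sum; apply: eq_bigr => l _; by rewrite [Jm _ _]mxE mulr1.
Qed.

Lemma Jmul (R : rel T) (a : nat) : symmetric R -> (forall x, #|[set y | R x y]| = a) ->
  Jm *m adj_mx R = a%:R *: Jm.
Proof.
move=> Rs Ha; rewrite -[adj_mx R]adj_mx_sym // -[Jm]trmx_const -trmx_mul (mulJ Ha).
by rewrite linearZ /= trmx_const.
Qed.

Lemma JJ : Jm *m Jm = #|T|%:R *: Jm.
Proof.
apply/matrixP => i j; rewrite !mxE mulr1 (eq_bigr (fun _ => 1)); last by move=> l _; rewrite !mxE mulr1.
by rewrite sumr_const card_ord.
Qed.

Lemma tr_adj (R : rel T) : irreflexive R -> \tr (adj_mx R) = 0.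
Proof. by move=> Ri; apply: big1 => i _; rewrite mxE Ri. Qed.



Lemma common_sym (adj : rel T) x y : symmetric adj -> common_nbrs adj x y = common_nbrs adj y x.
Proof. by move=> s; rewrite /common_nbrs; congr (#|pred_of_set _|); apply/setP => z; rewrite !inE andbC. Qed.

Section SRG.
Variables (adj : rel T) (adj_sym : symmetric adj) (adj_irr : irreflexive adj).
Variables (v k e d : nat) (srg : is_srg adj v k e d).
Local Notation A := (adj_mx adj).

Lemma sq_entry i j : (A *m A) i j = (common_nbrs adj (enum_val i) (enum_val j))%:R.
Proof.
rewrite mxE /common_nbrs -sum_indic -sum_enum; apply: eq_bigr => l _.
by rewrite !mxE (adj_sym _ (enum_val j)) -natrM mulnb.
Qed.

Lemma A2 : A *m A = (k%:R - d%:R)%:M + (e%:R - d%:R) *: A + d%:R *: Jm.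
Proof.
case: srg => _ Hk He Hd _.
apply/matrixP => i j; rewrite sq_entry !mxE.
have [<-|ij] := eqVneq i j.
  rewrite [_ *+ _]/= mulr1n adj_irr /common_nbrs.
  have -> : [set z | adj (enum_val i) z && adj (enum_val i) z] = [set z | adj (enum_val i) z].
    by apply/setP => z; rewrite !inE andbb.
  by rewrite Hk mulr0 addr0 mulr1 subrK.
have xy : enum_val i != enum_val j by apply: contraNneq ij => /enum_val_inj ->.
rewrite [_ *+ _]/= mulr0n add0r.
case Hxy : (adj _ _).
  by rewrite He // mulr1 mulr1 subrK.
by rewrite Hd ?Hxy // mulr0 mulr1 add0r.
Qed.

Lemma AJ : A *m Jm = k%:R *: Jm.
Proof. by case: srg => _ Hk _ _ _; apply: mulJ. Qed.
Lemma JA : Jm *m A = k%:R *: Jm.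
Proof. by case: srg => _ Hk _ _ _; apply: Jmul. Qed.

Definition comb (a b c : algC) : 'M[algC]_#|T| := a%:M + b *: A + c *: Jm.

Lemma comb_mul a1 b1 c1 a2 b2 c2 :
  comb a1 b1 c1 *m comb a2 b2 c2 =
  comb (a1 * a2 + b1 * b2 * (k%:R - d%:R))
       (a1 * b2 + b1 * a2 + b1 * b2 * (e%:R - d%:R))
       (a1 * c2 + c1 * a2 + b1 * b2 * d%:R + b1 * c2 * k%:R + c1 * b2 * k%:R
        + c1 * c2 * #|T|%:R).
Proof.
rewrite /comb !mulmxDl !mulmxDr !mul_scalar_mx !mul_mx_scalar -!scalemxAl -!scalemxAr.
rewrite A2 AJ JA JJ.
apply/matrixP => i j; rewrite !mxE.
set z := (adj _ _)%:R; case: (i == j); rewrite /= ?mulr1n ?mulr0n; ring.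
Qed.

Lemma combA : A = comb 0 1 0.
Proof. by rewrite /comb scale1r scale0r !addr0 -scalemx1 scale0r add0r. Qed.

Lemma comb_sub a b c x : comb a b c - x%:M = comb (a - x) b c.
Proof. by rewrite /comb; apply/matrixP => i j; rewrite !mxE; case: (i == j); rewrite /= ?mulr1n ?mulr0n; ring. Qed.

Lemma comb0 : comb 0 0 0 = 0.
Proof. by rewrite /comb !scale0r !addr0 -scalemx1 scale0r. Qed.

Lemma H1 : (k * k + d * (k + 1) = k + e * k + d * v)%N.
Proof.
have [Hv _ _ _ [_ [x0 [_ _]]]] := srg.
pose i0 := enum_rank x0.
have E : comb 0 1 0 *m comb 0 1 0 *m comb 0 0 1 = comb 0 1 0 *m (comb 0 1 0 *m comb 0 0 1).
  by rewrite mulmxA.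
rewrite !comb_mul in E; move/matrixP: E => /(_ i0 i0); rewrite !mxE eqxx adj_irr /= mulr1n.
rewrite Hv !mulr1n => E.
apply/eqP; rewrite -(eqr_nat algC) !natrD !natrM; apply/eqP.
by apply: (from_eq (c := -1) _ E); ring.
Qed.


Local Notation Ac := (adj_mx (compl_graph adj)).

Lemma combC : Ac = comb (-1) (-1) 1.
Proof.
apply/matrixP => i j; rewrite /comb !mxE /compl_graph.
have [<-|ij] := eqVneq i j.
  by rewrite eqxx adj_irr /= mulr1n; ring.
have xy : enum_val i != enum_val j by apply: contraNneq ij => /enum_val_inj ->.
rewrite xy [_ *+ _]/= mulr0n /=; case: (adj _ _) => /=; ring.
Qed.

Lemma compl_sym : symmetric (compl_graph adj).
Proof. by move=> x y; rewrite /compl_graph eq_sym adj_sym. Qed.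

Lemma compl_irr : irreflexive (compl_graph adj).
Proof. by move=> x; rewrite /compl_graph eqxx. Qed.

Lemma cubA (r s : algC) : r + s = e%:R - d%:R -> r * s = d%:R - k%:R ->
  (A - r%:M) *m (A - s%:M) *m (A - (k%:R)%:M) = 0.
Proof.
move=> h1 h2; have he : e%:R = r + s + d%:R by rewrite h1 subrK.
have hk : k%:R = d%:R - r * s by rewrite h2 opprB addrC subrK.
rewrite combA !comb_sub !comb_mul -comb0 he hk; congr comb; ring.
Qed.

Lemma cubC (r s : algC) : r + s = e%:R - d%:R -> r * s = d%:R - k%:R ->
  (Ac - (-1 - s)%:M) *m (Ac - (-1 - r)%:M) *m (Ac - (#|T|%:R - 1 - k%:R)%:M) = 0.
Proof.
move=> h1 h2; have he : e%:R = r + s + d%:R by rewrite h1 subrK.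
have hk : k%:R = d%:R - r * s by rewrite h2 opprB addrC subrK.
rewrite combC !comb_sub !comb_mul -comb0 he hk; congr comb; ring.
Qed.

Lemma trA : \tr A = 0.
Proof. exact: tr_adj. Qed.
Lemma trAc : \tr Ac = 0.
Proof. exact: tr_adj compl_irr. Qed.

Lemma trA2 : \tr (A *m A) = #|T|%:R * k%:R.
Proof.
case: srg => _ Hk _ _ _; rewrite tr_sq // (eq_bigr (fun _ => k%:R)).
  by rewrite sumr_const card_ord mulr_natl.
by move=> i _; rewrite adj_row_sum Hk.
Qed.

Lemma trAc2 : \tr (Ac *m Ac) = #|T|%:R * (#|T|%:R - 1 - k%:R).
Proof.
rewrite tr_sq; last exact: compl_sym.
rewrite (eq_bigr (fun _ => #|T|%:R - 1 - k%:R)).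
  by rewrite sumr_const card_ord mulr_natl.
move=> i _.
have E : Ac *m Jm = comb 0 0 (#|T|%:R - 1 - k%:R).
  have -> : Jm = comb 0 0 1 by rewrite /comb scale1r scale0r addr0 -scalemx1 scale0r add0r.
  by rewrite combC comb_mul; congr comb; ring.
move/matrixP: E => /(_ i i); rewrite !mxE mul0rn mul0r !add0r mulr1 => <-.
by apply: eq_bigr => l _; rewrite [Jm _ _]mxE mulr1.
Qed.

Lemma k_ge1 : (1 <= k)%N.
Proof.
case: srg => _ Hk _ _ [_ [x [y xy]]]; rewrite -(Hk x).
by apply/card_gt0P; exists y; rewrite inE.
Qed.

Lemma v_ge : (k + 2 <= v)%N.
Proof.
case: srg => Hv Hk _ _ [[x [y [xy nxy]]] _]; rewrite -(Hk x) -Hv.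
have sub : [set z | adj x z] \subset ~: [set x; y].
  apply/subsetP => z; rewrite !inE; apply: contraL => /orP[] /eqP ->.
    by rewrite adj_irr.
  by rewrite (negPf nxy).
have := subset_leq_card sub; have := cardsC [set x; y]; rewrite cards2 xy; lia.
Qed.

Lemma d_le_k : (d <= k)%N.
Proof.
case: srg => _ Hk _ Hd [[x [y [xy nxy]]] _]; rewrite -(Hk x) -(Hd x y xy nxy).
by apply: subset_leq_card; apply/subsetP => z; rewrite !inE => /andP[].
Qed.

Lemma d_ge1 : connected_graph adj -> (1 <= d)%N.
Proof.
move=> conn; case: srg => _ _ _ Hd [[x [y [xy nxy]]] _].
rewrite lt0n; apply/negP => /eqP d0.
pose a := [pred z | (z == x) || adj x z].
have cl : closed adj a.
  apply: intro_closed; first exact: sym_connect_sym.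
  move=> z w zw; rewrite !inE => /orP[/eqP zx|xz]; first by rewrite -zx zw orbT.
  case: eqP => //= wx; apply/negPn/negP => nxw.
  have wx' : x != w by apply/eqP => h; apply: wx; rewrite h.
  have := Hd x w wx' nxw; rewrite d0 /common_nbrs => /eqP; rewrite cards_eq0 => /eqP/setP/(_ z).
  by rewrite !inE xz adj_sym zw.
have := closed_connect cl (conn x y); rewrite !inE eqxx /= => /esym /orP[]; last by rewrite (negPf nxy).
by move=> /eqP yx; move: xy; rewrite yx eqxx.
Qed.

Lemma d_lt_k : connected_graph (compl_graph adj) -> (d < k)%N.
Proof.
move=> conn; rewrite ltn_neqAle d_le_k andbT; apply/negP => /eqP dk.
case: srg => _ Hk _ Hd [[x0 [y0 [xy0 nxy0]]] [x1 [y1 a1]]].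
have Ns x y : compl_graph adj x y -> [set w | adj x w] = [set w | adj y w].
  case/andP => xy nxy.
  pose C := [set z | adj x z && adj y z].
  have Cx : C = [set w | adj x w].
    apply/eqP; rewrite eqEcard; apply/andP; split.
      by apply/subsetP => z; rewrite !inE => /andP[].
    by rewrite Hk /C -/(common_nbrs adj x y) Hd // dk.
  have Cy : C = [set w | adj y w].
    apply/eqP; rewrite eqEcard; apply/andP; split.
      by apply/subsetP => z; rewrite !inE => /andP[].
    by rewrite Hk /C -/(common_nbrs adj x y) Hd // dk.
  by rewrite -Cx -Cy.
pose a := [pred z | [set w | adj z w] == [set w | adj x0 w]].
have cl : closed (compl_graph adj) a.
  apply: intro_closed; first exact/sym_connect_sym/compl_sym.
  by move=> z w /Ns zw; rewrite !inE zw.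
have E z : [set w | adj z w] = [set w | adj x0 w].
  by apply/eqP; have := closed_connect cl (conn x0 z); rewrite !inE eqxx => <-.
have : y1 \in [set w | adj x1 w] by rewrite inE.
by rewrite E -(E y1) inE adj_irr.
Qed.

End SRG.
End Graph.

Lemma lt_of_sq (x y : algC) : x \is Num.real -> 0 <= y -> x ^+ 2 < y ^+ 2 -> x < y.
Proof.
move=> xr y0 h; case: (real_ge0P xr) => [x0|x0]; last exact: lt_le_trans x0 y0.
by rewrite -(@ltr_pXn2r _ 2 isT x y) // nnegrE.
Qed.

Section Num.
Variables (v k e d : nat).
Definition pp : algC := e%:R - d%:R.
Definition dd : algC := sqrtC (pp ^+ 2 + 4 * (k%:R - d%:R)).
Definition rr : algC := (pp + dd) / 2.
Definition ss : algC := (pp - dd) / 2.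

Lemma dd_ge0 : (d <= k)%N -> 0 <= dd.
Proof.
move=> dk; rewrite sqrtC_ge0 addr_ge0 // ?sqr_ge0 ?real_exprn_even_ge0 //.
  rewrite /pp; apply: realB; exact: realn.
by rewrite mulr_ge0 // subr_ge0 ler_nat.
Qed.

Lemma dd2 : dd ^+ 2 = pp ^+ 2 + 4 * (k%:R - d%:R).
Proof. exact: sqrtCK. Qed.

Lemma rs_sum : rr + ss = e%:R - d%:R.
Proof. rewrite /rr /ss -/pp; by field. Qed.

Lemma rs_prod : rr * ss = d%:R - k%:R.
Proof.
rewrite /rr /ss; have := dd2.
move: dd pp => D P h; apply/eqP; rewrite -subr_eq0; apply/eqP.
have -> : (P + D) / 2 * ((P - D) / 2) - (d%:R - k%:R) = (P ^+ 2 + 4 * (k%:R - d%:R) - D ^+ 2) / 4 by field.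
by rewrite h subrr mul0r.
Qed.

Lemma pp_real : pp \is Num.real.
Proof. by rewrite /pp realB ?realn. Qed.

Lemma rr_gt0 : (d < k)%N -> 0 < rr.
Proof.
move=> dk; have dk' := ltnW dk.
have h : - pp < dd.
  apply: lt_of_sq; first by rewrite realN pp_real.
    exact: dd_ge0.
  by rewrite dd2 sqrrN ltrDl mulr_gt0 // subr_gt0 ltr_nat.
by rewrite /rr divr_gt0 // addrC -(opprK pp) subr_gt0.
Qed.

Lemma ss_lt : (e + 1 < k)%N -> (d <= k)%N -> ss < -1.
Proof.
move=> ek dk.
have h : pp + 2 < dd.
  apply: lt_of_sq; first by rewrite realD ?pp_real ?realn.
    exact: dd_ge0.
  rewrite dd2 -subr_gt0.
  have -> : pp ^+ 2 + 4 * (k%:R - d%:R) - (pp + 2) ^+ 2 = 4 * (k%:R - (e + 1)%:R).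
    by rewrite /pp natrD; ring.
  by rewrite mulr_gt0 // subr_gt0 ltr_nat.
rewrite -subr_lt0.
have -> : ss - -1 = (pp + 2 - dd) / 2 by rewrite /ss; field.
by rewrite pmulr_llt0 ?invr_gt0 // subr_lt0.
Qed.

End Num.


Lemma int_root (r p c : algC) : p \in Num.int -> c \in Num.int -> r \in Crat ->
  r ^+ 2 - p * r - c = 0 -> r \in Num.int.
Proof.
move=> pi ci rq h; apply: Cint_rat_Aint => //.
apply: (@root_monic_Aint (('X - p%:P) * 'X - c%:P)).
- by rewrite /root !hornerE -h; apply/eqP; ring.
- apply/monicP; rewrite lead_coefDl.
    by rewrite lead_coefMX lead_coefXsubC.
  rewrite size_opp size_mulX ?polyXsubC_eq0 // size_XsubC.
  by apply: leq_ltn_trans (size_polyC_leq1 _) _.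
  apply/polyOverP => i; rewrite coefB coefMX coefB coefX !coefC.
  case: i => [|[|i]] /=; rewrite ?subr0 ?sub0r ?rpredN ?rpred0 ?rpred1 //.
Qed.

Lemma from_eq2 (x y u1 w1 u2 w2 c0 c1 c2 : algC) : c0 != 0 ->
  c0 * (x - y) = c1 * (u1 - w1) + c2 * (u2 - w2) -> u1 = w1 -> u2 = w2 -> x = y.
Proof.
move=> c0n h h1 h2; apply/eqP; rewrite -subr_eq0; apply/eqP.
apply: (mulfI c0n); rewrite h h1 h2 !subrr !mulr0 addr0 //.
Qed.

Lemma srg_unique (T : finType) (adj : rel T) v k e d v' k' e' d' :
  is_srg adj v k e d -> is_srg adj v' k' e' d' -> [/\ v' = v, k' = k, e' = e & d' = d].
Proof.
case=> Hv Hk He Hd [[x [y [xy nxy]]] [a [b ab]]].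
case=> Hv' Hk' He' Hd' _.
split.
- by rewrite -Hv -Hv'.
- by rewrite -(Hk x) -(Hk' x).
- by rewrite -(He a b ab) -(He' a b ab).
- by rewrite -(Hd x y xy nxy) -(Hd' x y xy nxy).
Qed.

Lemma oa_arith (R M d k e w v: nat) : (2 <= M)%N -> (1 <= R)%N -> (R + d = e + M)%N ->
  (R * M + d = k)%N -> (k * R + k = w * M)%N -> (M * M = d + M)%N -> v = (w + 1 + k)%N ->
  (M * (R + M - 1) = k)%N /\ ((R + M) ^ 2 = v)%N /\ (M ^ 2 + (R + M) - 3 * M = e)%N /\ (M * (M - 1) = d)%N.
Proof.
move=> M2 R1 A1 A2 A3 A4 hv.
have kE : (k = M * (R + M - 1))%N by nia.
have wE : (w = (R + M - 1) * (R + 1))%N.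
  apply/eqP; rewrite -(eqn_pmul2r (_ : (0 < M)%N)); last by lia.
  apply/eqP; rewrite -A3 kE; move: (R + M - 1)%N => N; ring.
split; first by rewrite kE.
split; first nia. split; nia.
Qed.

Lemma oa_nat (n m e k : nat) : (0 < m)%N -> (1 <= k)%N -> (m * (n - 1) = k)%N ->
  (m ^ 2 + n - 3 * m = e)%N -> (2 <= n)%N /\ (e + 3 * m = m ^ 2 + n)%N.
Proof.
move=> m0 k1 kt et.
have n2 : (2 <= n)%N.
  case: n kt et => [|[|n]] //= kt; [by rewrite muln0 in kt; lia | by rewrite subnn muln0 in kt; lia].
split => //.
have [m1|m2] : (m = 1)%N \/ (2 <= m)%N by lia.
  by rewrite -et m1; lia.
by rewrite -et; nia.
Qed.

Section Main.
Variables (T : finType) (adj : rel T) (adj_sym : symmetric adj) (adj_irr : irreflexive adj).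
Variables (v k e d : nat) (srg : is_srg adj v k e d).
Hypotheses (c1 : connected_graph adj) (c2 : connected_graph (compl_graph adj)).
Local Notation r := (rr k e d).
Local Notation s := (ss k e d).

Lemma nat_facts : [/\ (1 <= k)%N, (k + 2 <= v)%N, (1 <= d)%N /\ (d < k)%N,
   (k * k + d * (k + 1) = k + e * k + d * v)%N & ((e + 1 < k)%N /\ (2 * k < v + e)%N)].
Proof.
have h1 := k_ge1 srg; have h2 := v_ge adj_irr srg; have h3 := d_ge1 adj_sym srg c1.
have h4 := d_lt_k adj_sym adj_irr srg c2; have h5 := H1 adj_sym adj_irr srg.
split => //; nia.
Qed.

Lemma sum_spec (R : rel T) (dd : 'rV[algC]_#|T|) :
  perm_eq (sval (closed_field_poly_normal (char_poly (adj_mx R)))) [seq dd 0 i | i <- enum 'I_#|T|] ->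
  forall F : algC -> algC, \sum_(z <- spectrum R) F z = \sum_i F (dd 0 i).
Proof. by move=> p F; rewrite /spectrum (perm_big _ p) big_map big_enum. Qed.

Lemma cancel_nz (x y a : algC) : x * a = y * a -> a != 0 -> x = y.
Proof. by move=> h a0; apply: (mulIf a0). Qed.

Lemma summary : exists cr cs : algC,
 [/\ cr + cs = v%:R - 1 /\ cr * r + cs * s = - k%:R,
     (forall F : algC -> algC, \sum_(z <- spectrum adj) F z = cr * F r + cs * F s + F k%:R),
     (forall F : algC -> algC, \sum_(z <- spectrum (compl_graph adj)) F z =
         cs * F (-1 - s) + cr * F (-1 - r) + F (v%:R - 1 - k%:R)),
     \sum_(z <- spectrum adj) z ^+ 2 = v%:R * k%:R &
     \sum_(z <- spectrum (compl_graph adj)) z ^+ 2 = v%:R * (v%:R - 1 - k%:R)].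
Proof.
have [hk1 hv [hd1 hdk] hH1 [hek hvk]] := nat_facts.
have Hv : #|T| = v by case: srg.
have rpos : 0 < r := rr_gt0 _ hdk.
have sneg : s < -1 := ss_lt hek (ltnW hdk).
have sneg0 : s < 0 by apply: lt_trans sneg _; rewrite oppr_lt0.
have rsum : r + s = e%:R - d%:R by apply: rs_sum.
have rprod : r * s = d%:R - k%:R by apply: rs_prod.
have H1C : k%:R * k%:R + d%:R * (k%:R + 1) = k%:R + e%:R * k%:R + d%:R * v%:R :> algC.
  have := congr1 (fun n => n%:R : algC) hH1; rewrite /= !natrD !natrM !natrD; exact.
have vn0 : v%:R != 0 :> algC by rewrite pnatr_eq0; lia.
have dn0 : d%:R != 0 :> algC by rewrite pnatr_eq0; lia.
have rs : r != s by rewrite gt_eqF // (lt_trans sneg0 rpos).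
have kr : (k%:R - r) * (k%:R - s) = v%:R * d%:R.
  have -> : (k%:R - r) * (k%:R - s) = k%:R * k%:R - k%:R * (r + s) + r * s by ring.
  rewrite rsum rprod; apply: (from_eq (c := 1) _ H1C); ring.
have vdn0 : v%:R * d%:R != 0 :> algC by rewrite mulf_neq0.
have rk : r != k%:R by apply: contra vdn0 => /eqP h; rewrite -kr h subrr mul0r.
have sk : s != k%:R by apply: contra vdn0 => /eqP h; rewrite -kr h subrr mulr0.
have [dA [pA trA1s trA2s cubA']] := spec_props (adj_mx_normal adj_sym).
have cubAi := cubA' _ _ _ (cubA adj_sym adj_irr srg rsum rprod).
have cntA := count3 rs rk sk cubAi.
have sA := sum_spec pA.
have T0 : cntv dA r + cntv dA s + cntv dA k%:R = v%:R.
  have := cntA (fun _ => 1); rewrite sumr_const card_ord => h.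
  by rewrite -Hv h; ring.
have T1 : cntv dA r * r + cntv dA s * s + cntv dA k%:R * k%:R = 0.
  by have := cntA id => /= <-; rewrite -trA1s trA.
have T2 : cntv dA r * r ^+ 2 + cntv dA s * s ^+ 2 + cntv dA k%:R * k%:R ^+ 2 = v%:R * k%:R.
  by have := cntA (fun z => z ^+ 2) => /= <-; rewrite -trA2s (trA2 adj_sym srg) Hv.
have ck1 : cntv dA k%:R = 1.
  have h : cntv dA k%:R * ((k%:R - r) * (k%:R - s)) =
     (cntv dA r * r ^+ 2 + cntv dA s * s ^+ 2 + cntv dA k%:R * k%:R ^+ 2)
     - (r + s) * (cntv dA r * r + cntv dA s * s + cntv dA k%:R * k%:R)
     + r * s * (cntv dA r + cntv dA s + cntv dA k%:R) by ring.
  rewrite T2 T1 T0 rprod kr in h.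
  apply: (cancel_nz _ vdn0); rewrite h; ring.
have hvT : (#|T|%:R : algC) = v%:R by rewrite Hv.
have [dC [pC trC1s trC2s cubC']] := spec_props (adj_mx_normal (compl_sym adj_sym)).
have cubCi := cubC' _ _ _ (cubC adj_sym adj_irr srg rsum rprod).
rewrite hvT in cubCi.
have ab : -1 - s != -1 - r by apply: contra rs => /eqP h; apply/eqP; apply: oppr_inj; apply: (addrI (-1)).
have vekn0 : v%:R - 2 * k%:R + e%:R != 0 :> algC.
  apply/eqP => h; have : ((v + e)%:R : algC) = (2 * k)%:R.
    by rewrite natrD natrM; apply: (from_eq (c := 1) _ h); ring.
  by move/eqP; rewrite eqr_nat => /eqP; lia.
have kc : (v%:R - 1 - k%:R - (-1 - s)) * (v%:R - 1 - k%:R - (-1 - r)) = v%:R * (v%:R - 2 * k%:R + e%:R).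
  have -> : (v%:R - 1 - k%:R - (-1 - s)) * (v%:R - 1 - k%:R - (-1 - r)) =
     (v%:R - k%:R) ^+ 2 + (v%:R - k%:R) * (r + s) + r * s by ring.
  rewrite rsum rprod; apply: (from_eq (c := 1) _ H1C); ring.
have vvn0 : v%:R * (v%:R - 2 * k%:R + e%:R) != 0 :> algC by rewrite mulf_neq0.
have ac : -1 - s != v%:R - 1 - k%:R by apply: contra vvn0 => /eqP h; rewrite -kc h subrr mul0r.
have bc : -1 - r != v%:R - 1 - k%:R by apply: contra vvn0 => /eqP h; rewrite -kc h subrr mulr0.
have cntC := count3 ab ac bc cubCi.
have sC := sum_spec pC.
have U0 : cntv dC (-1 - s) + cntv dC (-1 - r) + cntv dC (v%:R - 1 - k%:R) = v%:R.
  have := cntC (fun _ => 1); rewrite sumr_const card_ord => h.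
  by rewrite -[in RHS]hvT h; ring.
have U1 : cntv dC (-1 - s) * (-1 - s) + cntv dC (-1 - r) * (-1 - r)
   + cntv dC (v%:R - 1 - k%:R) * (v%:R - 1 - k%:R) = 0.
  by have := cntC id => /= <-; rewrite -trC1s trAc.
have U2 : cntv dC (-1 - s) * (-1 - s) ^+ 2 + cntv dC (-1 - r) * (-1 - r) ^+ 2
   + cntv dC (v%:R - 1 - k%:R) * (v%:R - 1 - k%:R) ^+ 2 = v%:R * (v%:R - 1 - k%:R).
  by have := cntC (fun z => z ^+ 2) => /= <-; rewrite -trC2s (trAc2 adj_sym adj_irr srg) hvT.
have cc1 : cntv dC (v%:R - 1 - k%:R) = 1.
  set c := v%:R - 1 - k%:R in U0 U1 U2 kc *.
  have h : cntv dC c * ((c - (-1 - s)) * (c - (-1 - r))) =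
     (cntv dC (-1 - s) * (-1 - s) ^+ 2 + cntv dC (-1 - r) * (-1 - r) ^+ 2 + cntv dC c * c ^+ 2)
     - ((-1 - s) + (-1 - r)) * (cntv dC (-1 - s) * (-1 - s) + cntv dC (-1 - r) * (-1 - r) + cntv dC c * c)
     + (-1 - s) * (-1 - r) * (cntv dC (-1 - s) + cntv dC (-1 - r) + cntv dC c) by ring.
  rewrite U2 U1 U0 kc in h.
  apply: (cancel_nz _ vvn0); rewrite h /c.
  have -> : (-1 - s) * (-1 - r) = 1 + (r + s) + r * s by ring.
  rewrite rsum rprod; ring.
have eq1 : cntv dA r + cntv dA s = v%:R - 1 by rewrite -T0 ck1; ring.
have eq2 : cntv dA r * r + cntv dA s * s = - k%:R by rewrite -[RHS]add0r -T1 ck1; ring.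
have eq3 : cntv dC (-1 - s) + cntv dC (-1 - r) = v%:R - 1 by rewrite -U0 cc1; ring.
have eq4 : cntv dC (-1 - s) * s + cntv dC (-1 - r) * r = - k%:R.
  apply: (from_eq (c := -1) _ U1); rewrite cc1.
  apply: (from_eq (c := -1) _ eq3); ring.
have rsn0 : r - s != 0 by rewrite subr_eq0.
have ec2 : cntv dC (-1 - r) = cntv dA r.
  apply/eqP; rewrite -subr_eq0; apply/eqP; apply: (cancel_nz (a := r - s)) => //.
  rewrite mul0r.
  have -> : (cntv dC (-1 - r) - cntv dA r) * (r - s) =
    (cntv dC (-1 - s) * s + cntv dC (-1 - r) * r) - (cntv dA r * r + cntv dA s * s)
    - s * ((cntv dC (-1 - s) + cntv dC (-1 - r)) - (cntv dA r + cntv dA s)) by ring.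
  by rewrite eq1 eq2 eq3 eq4 !subrr mulr0 subrr.
have ec1 : cntv dC (-1 - s) = cntv dA s.
  by apply: (addIr (cntv dA r)); rewrite -{1}ec2 eq3 -eq1 addrC.
exists (cntv dA r), (cntv dA s); split => //.
- by move=> F; rewrite sA cntA ck1 mul1r.
- by move=> F; rewrite sC cntC cc1 ec1 ec2 mul1r.
- by rewrite sA -trA2s (trA2 adj_sym srg) hvT.
- by rewrite sC -trC2s (trAc2 adj_sym adj_irr srg) hvT.
Qed.

Lemma natC (a b : nat) : (a%:R : algC) = b%:R -> a = b.
Proof. by move/eqP; rewrite eqr_nat => /eqP. Qed.

Lemma conf_case : k%:R * r + (v%:R - 1 - k%:R) * s + k%:R = 0 ->
  (v - 1 - k = k)%N -> conference_graph adj.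
Proof.
move=> Es wk.
have [hk1 hv [hd1 hdk] hH1 [hek hvk]] := nat_facts.
have rsum : r + s = e%:R - d%:R by apply: rs_sum.
have vC : v%:R = (k + 1 + k)%:R :> algC by congr (_%:R); lia.
rewrite vC !natrD in Es.
have h : k%:R * (r + s + 1) = 0 by rewrite -Es; ring.
move/eqP: h; rewrite mulf_eq0 pnatr_eq0 (_ : (k == 0)%N = false) /=; last by apply/eqP; lia.
rewrite rsum => /eqP h.
have ed : (e + 1 = d)%N by apply: natC; rewrite natrD; apply/eqP; rewrite -subr_eq0; apply/eqP; rewrite -h; ring.
exists d.
have -> : (4 * d + 1 = v)%N by nia.
have -> : (2 * d = k)%N by nia.
have -> : (d - 1 = e)%N by lia.
exact: srg.
Qed.

Lemma oa_case : k%:R * r + (v%:R - 1 - k%:R) * s + k%:R = 0 ->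
  (v - 1 - k != k)%N ->
  exists n m : nat, [/\ (0 < n)%N, (0 < m)%N, m <> n, m <> n.+1 & OA_params adj n m].
Proof.
move=> Es wk.
have [hk1 hv [hd1 hdk] hH1 [hek hvk]] := nat_facts.
have rsum : r + s = e%:R - d%:R by apply: rs_sum.
have rprod : r * s = d%:R - k%:R by apply: rs_prod.
have rpos : 0 < r := rr_gt0 _ hdk.
have sneg : s < -1 := ss_lt hek (ltnW hdk).
set w := (v - 1 - k)%N.
have wC : v%:R - 1 - k%:R = w%:R :> algC.
  have -> : v = (w + 1 + k)%N by rewrite /w; lia.
  by rewrite !natrD; ring.
rewrite wC in Es.
have H1C : k%:R * k%:R + d%:R * (k%:R + 1) = k%:R + e%:R * k%:R + d%:R * (w%:R + 1 + k%:R) :> algC.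
  have := congr1 (fun n => n%:R : algC) hH1; rewrite /= !natrD !natrM !natrD.
  have -> : v = (w + 1 + k)%N by rewrite /w; lia.
  by rewrite !natrD.
have kw : k%:R - w%:R != 0 :> algC.
  by rewrite subr_eq0; apply/eqP => /natC h; move: wk; rewrite -/w h eqxx.
have rE : r = (- k%:R - w%:R * (e%:R - d%:R)) / (k%:R - w%:R).
  apply: (mulIf kw); rewrite divfK //.
  apply: (from_eq (c := 1) _ Es); rewrite -rsum; ring.
have rQ : r \in Crat.
  by rewrite rE !(rpred_div, rpredB, rpredN, rpredM, rpred_nat).
have rI : r \in Num.int.
  apply: (int_root (p := e%:R - d%:R) (c := k%:R - d%:R)) => //.
  - by rewrite rpredB ?intr_nat ?natr_nat.
  - by rewrite rpredB ?intr_nat ?natr_nat.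
  have -> : k%:R - d%:R = - (r * s) by rewrite rprod; ring.
  by rewrite -rsum; ring.
have [R rR] : exists R : nat, r = R%:R.
  by apply/natrP; rewrite natrEint rI ltW.
have sI : - s \in Num.int.
  have -> : - s = r - (e%:R - d%:R) by rewrite -rsum; ring.
  by rewrite rpredB // rpredB ?intr_nat ?natr_nat.
have [M sM] : exists M : nat, - s = M%:R.
  apply/natrP; rewrite natrEint sI oppr_ge0 ltW //; apply: lt_trans sneg _.
  by rewrite oppr_lt0.
have sM' : s = - M%:R by rewrite -sM opprK.
have R1 : (1 <= R)%N by rewrite -(ltr0n algC) -rR.
have M2 : (2 <= M)%N by rewrite -(ltr_nat algC) -ltrN2 -sM' .
rewrite rR sM' in rsum rprod Es.
have A1 : (R + d = e + M)%N.
  by apply: natC; rewrite !natrD; apply: (from_eq (c := 1) _ rsum); ring.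
have A2 : (R * M + d = k)%N.
  by apply: natC; rewrite !natrD natrM; apply: (from_eq (c := -1) _ rprod); ring.
have A3 : (k * R + k = w * M)%N.
  by apply: natC; rewrite !natrD !natrM; apply: (from_eq (c := 1) _ Es); ring.
have A4 : (M * M = d + M)%N.
  have G : k%:R * (R%:R + 1) * ((- M%:R) * (- M%:R + 1) - d%:R) = 0 :> algC.
    have he : e%:R = R%:R + - M%:R + d%:R :> algC by rewrite rsum subrK.
    have hk : k%:R = d%:R - R%:R * - M%:R :> algC by rewrite rprod opprB addrC subrK.
    rewrite he hk in H1C Es *.
    apply: (from_eq2 (c0 := 1) (c1 := M%:R) (c2 := - d%:R) (oner_neq0 _) _ H1C Es).
    ring.
  move/eqP: G; rewrite !mulf_eq0 pnatr_eq0 (_ : (k == 0)%N = false) /=; last by apply/eqP; lia.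
  rewrite paddr_eq0 ?ler0n // oner_eq0 andbF /= subr_eq0 => /eqP G.
  by apply: natC; rewrite natrD natrM; rewrite -G; ring.
have hvw : v = (w + 1 + k)%N by rewrite /w; lia.
have [kE [vE [eE dE]]] := oa_arith M2 R1 A1 A2 A3 A4 hvw.
exists (R + M)%N, M; split.
- lia.
- lia.
- lia.
- lia.
rewrite /OA_params kE vE eE dE.
exact: srg.
Qed.

Lemma main_sec :
  (energy adj = energy (compl_graph adj) <->
     conference_graph adj \/
     exists n m : nat, [/\ (0 < n)%N, (0 < m)%N, m <> n, m <> n.+1 & OA_params adj n m])
  /\
  (energy adj = energy (compl_graph adj) -> ~ conference_graph adj ->
     ~ isospectral adj (compl_graph adj)).
Proof.
have [cr [cs [[eq1 eq2] sA sC sqA sqC]]] := summary.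
have [hk1 hv [hd1 hdk] hH1 [hek hvk]] := nat_facts.
have rsum : r + s = e%:R - d%:R by apply: rs_sum.
have rprod : r * s = d%:R - k%:R by apply: rs_prod.
have rpos : 0 < r := rr_gt0 _ hdk.
have sneg : s < -1 := ss_lt hek (ltnW hdk).
have sneg0 : s < 0 by apply: lt_trans sneg _; rewrite oppr_lt0.
have rs : r != s by rewrite gt_eqF // (lt_trans sneg0 rpos).
have wC : v%:R - 1 - k%:R = (v - 1 - k)%:R :> algC.
  have {1}-> : v = ((v - 1 - k) + 1 + k)%N by lia.
  by rewrite !natrD; ring.
have EA : energy adj = cr * r - cs * s + k%:R.
  by rewrite /energy sA gtr0_norm // (ltr0_norm sneg0) normr_nat; ring.
have EC : energy (compl_graph adj) = cs * (-1 - s) + cr * (1 + r) + (v%:R - 1 - k%:R).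
  rewrite /energy sC gtr0_norm ?subr_gt0 // ltr0_norm ?subr_lt0; last first.
    by apply: lt_trans rpos; rewrite oppr_lt0.
  by rewrite wC normr_nat; ring.
have Eiff : energy adj = energy (compl_graph adj) <-> cr = k%:R.
  rewrite EA EC; split => h.
    have two0 : (2 : algC) != 0 by rewrite pnatr_eq0.
    apply: (from_eq2 (c1 := -1) (c2 := 1) two0 _ h eq1); ring.
  have -> : cs = v%:R - 1 - cr by rewrite -eq1; ring.
  by rewrite h; ring.
have key : (cr - k%:R) * (r - s) = - (k%:R * r + (v%:R - 1 - k%:R) * s + k%:R).
  have -> : (cr - k%:R) * (r - s) = (cr * r + cs * s + k%:R)
     - (k%:R * r + (v%:R - 1 - k%:R) * s + k%:R) - s * (cr + cs - (v%:R - 1)) by ring.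
  by rewrite eq2 eq1 !subrr mulr0 subr0 addNr sub0r.
have rsn0 : r - s != 0 by rewrite subr_eq0.
have Estar : cr = k%:R <-> k%:R * r + (v%:R - 1 - k%:R) * s + k%:R = 0.
  split => h.
    by apply: oppr_inj; rewrite -key h subrr mul0r oppr0.
  by apply/eqP; rewrite -subr_eq0; apply/eqP; apply: (mulIf rsn0); rewrite key h oppr0 mul0r.
split.
  split.
    move/Eiff/Estar => Es; have [wk|wk] := eqVneq (v - 1 - k)%N k.
      by left; exact: conf_case Es wk.
    by right; exact: oa_case Es wk.
  case => [[t ct] | [n [m [n0 m0 mn mn1 oa]]]]; apply/Eiff/Estar.
    have [vt kt et dt] := srg_unique srg ct.
    have ed : (e + 1 = d)%N by lia.
    have vC : v%:R = (k + 1 + k)%:R :> algC by congr (_%:R); lia.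
    have he : e%:R = d%:R - 1 :> algC by rewrite -ed natrD; ring.
    rewrite he in rsum; rewrite vC !natrD.
    by apply: (from_eq (c := k%:R) _ rsum); ring.
  have [vt kt et dt] := srg_unique srg oa.
  have [n2 he3] := oa_nat m0 hk1 kt et.
  have eC : e%:R = m%:R ^+ 2 + n%:R - 3 * m%:R :> algC.
    apply/eqP; rewrite -subr_eq0; apply/eqP.
    have := congr1 (fun x => x%:R : algC) he3; rewrite /= !natrD !natrM ?natrX => h.
    by apply: (from_eq (c := 1) _ h); ring.
  have dC : d%:R = m%:R * (m%:R - 1) :> algC.
    by rewrite -dt natrM natrB ?m0.
  have kC : k%:R = m%:R * (n%:R - 1) :> algC.
    by rewrite -kt natrM natrB //; lia.
  have vC : v%:R = n%:R ^+ 2 :> algC by rewrite -vt natrX.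
  rewrite eC dC in rsum; rewrite dC kC in rprod.
  have rE : r = n%:R - m%:R.
    have hm : r + m%:R != 0.
      by apply: lt0r_neq0; apply: (lt_le_trans rpos); rewrite lerDl ler0n.
    apply/eqP; rewrite -subr_eq0; apply/eqP; apply: (mulIf hm); rewrite mul0r.
    apply: (from_eq2 (c0 := 1) (c1 := r) (c2 := -1) (oner_neq0 _) _ rsum rprod).
    ring.
  have sE : s = - m%:R.
    by apply: (addrI r); rewrite rsum rE; ring.
  by rewrite rE sE vC kC; ring.
move=> EE nc iso.
have Es := (Estar.1 (Eiff.1 EE)).
have := perm_big _ iso (R := algC) (op := +%R) (x := 0) (P := xpredT) (F := fun z => z ^+ 2).
rewrite sqA sqC => h.
have vn0 : v%:R != 0 :> algC by rewrite pnatr_eq0; lia.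
have := mulfI vn0 h; rewrite wC => /natC wk.
exact: nc (conf_case Es (esym wk)).
Qed.

End Main.

End Aux.

Theorem mainTheorem13 (T : finType) (adj : rel T)
    (adj_sym : symmetric adj) (adj_irr : irreflexive adj)
    (n0 k0 e0 d0 : nat) (srg : is_srg adj n0 k0 e0 d0)
    (prim : primitive_srg adj) :
  (energy adj = energy (compl_graph adj) <->
     conference_graph adj \/
     exists n m : nat, [/\ 0 < n, 0 < m, m <> n, m <> n.+1 & OA_params adj n m])
  /\
  (energy adj = energy (compl_graph adj) -> ~ conference_graph adj ->
     ~ isospectral adj (compl_graph adj)).
Proof.
case: prim => c1 c2.
exact: (Aux.main_sec adj_sym adj_irr srg c1 c2).
Qed.
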